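(* Let $\Omega\subseteq\mathbb{R}$ and let $f,g:\Omega\to\mathbb{R}$ be twice differentiable such that $f'$ and $g'$ are invertible and the inverse functions $(f')^{-1},(g')^{-1}$ are differentiable and convex. Then for any $p,q\in\Omega$ and $z\in\mathbb{R}$ with $g'(q)=f'(p)-z$: $$q\ge p+\frac{f'(p)-g'(p)-z}{g''(p)},\qquad q\le p+\frac{f'(p)-g'(p)-z}{g''(q)},$$ $$q\ge p+\frac{f'(q)-g'(q)-z}{f''(p)},\qquad q\le p+\frac{f'(q)-g'(q)-z}{f''(q)}.$$ *)

(* Defs.v *)
From Stdlib Require Import Reals.
From Coquelicot Require Import Coquelicot.
Open Scope R_scope.

Definition img (h : R -> R) (S : R -> Prop) (y : R) : Prop :=
  exists x, S x /\ y = h x.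

Definition convex_set (S : R -> Prop) : Prop :=
  forall x y t, S x -> S y -> 0 <= t <= 1 -> S (t * x + (1 - t) * y).

Definition convex_on (S : R -> Prop) (F : R -> R) : Prop :=
  convex_set S /\
  forall x y t, S x -> S y -> 0 <= t <= 1 ->
    F (t * x + (1 - t) * y) <= t * F x + (1 - t) * F y.

Definition twice_diff_on (S : R -> Prop) (f : R -> R) : Prop :=
  forall x, S x -> ex_derive f x /\ ex_derive (Derive f) x.

Definition inverse_on (S : R -> Prop) (h Finv : R -> R) : Prop :=
  (forall x y, S x -> S y -> h x = h y -> x = y) /\
  (forall x, S x -> Finv (h x) = x).

(* Main.v *)
Require Import Defs.
From Stdlib Require Import Reals Lra.
From Coquelicot Require Import Coquelicot.
Open Scope R_scope.

Lemma tangent_ineq (S : R -> Prop) (H : R -> R) x y d :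
  convex_on S H -> S x -> S y -> is_derive H x d -> d * (y - x) <= H y - H x.
Proof.
  intros [_ Hc] Sx Sy Hd.
  assert (Hd0 : is_derive H (x + 0 * (y - x)) d).
  { replace (x + 0 * (y - x)) with x by ring. exact Hd. }
  assert (Hphi : is_derive (fun t => H (x + t * (y - x))) 0 ((y - x) * d)).
  { apply (is_derive_comp H (fun t => x + t * (y - x)) 0 d (y - x)); [exact Hd0|].
    auto_derive; [exact I | ring]. }
  apply is_derive_Reals in Hphi.
  destruct (Rle_or_lt (d * (y - x)) (H y - H x)) as [?|Hlt]; [assumption|exfalso].
  destruct (Hphi (d * (y - x) - (H y - H x)) ltac:(lra)) as [delta Hdel].
  set (t := Rmin (delta / 2) 1).
  assert (Ht0 : 0 < t) by (unfold t; apply Rmin_glb_lt; [pose proof (cond_pos delta); lra | lra]).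
  assert (Ht1 : t <= 1) by (unfold t; apply Rmin_r).
  assert (Htd : t < delta) by (unfold t; pose proof (Rmin_l (delta/2) 1); pose proof (cond_pos delta); lra).
  specialize (Hdel t ltac:(lra) ltac:(rewrite Rabs_pos_eq; lra)).
  simpl in Hdel.
  replace (x + (0 + t) * (y - x)) with (t * y + (1 - t) * x) in Hdel by ring.
  replace (x + 0 * (y - x)) with x in Hdel by ring.
  pose proof (Hc y x t Sy Sx ltac:(lra)) as Hcv.
  assert (Hq : (H (t * y + (1 - t) * x) - H x) / t <= H y - H x).
  { apply (Rmult_le_reg_r t); [lra|]. unfold Rdiv. rewrite Rmult_assoc, Rinv_l by lra. lra. }
  apply Rabs_def2 in Hdel. lra.
Qed.

Lemma deriv_inv (S : R -> Prop) (h Hinv : R -> R) a dh dH :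
  open S -> (forall x, S x -> Hinv (h x) = x) -> S a ->
  is_derive h a dh -> is_derive Hinv (h a) dH -> dH * dh = 1.
Proof.
  intros HO Hi Sa Hh HH.
  pose proof (is_derive_comp Hinv h a dH dh HH Hh) as Hc.
  assert (Hc' : is_derive (fun t : R => t) a (scal dh dH)).
  { eapply is_derive_ext_loc; [|exact Hc].
    apply (filter_imp S); [|exact (HO a Sa)]. intros t St. simpl. apply Hi; exact St. }
  apply is_derive_unique in Hc'.
  assert (Hid : Derive (fun t : R => t) a = 1) by (apply is_derive_unique; exact (is_derive_id a)).
  rewrite Hid in Hc'. unfold scal in Hc'; simpl in Hc'. unfold mult in Hc'; simpl in Hc'. lra.
Qed.

Lemma key (S : R -> Prop) (h Hinv : R -> R) a b :
  open S -> (forall x, S x -> ex_derive h x) ->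
  inverse_on S h Hinv ->
  (forall y, img h S y -> ex_derive Hinv y) ->
  convex_on (img h S) Hinv -> S a -> S b ->
  b - a >= (h b - h a) / Derive h a.
Proof.
  intros HO Hd [_ Hi] HHd Hc Sa Sb.
  assert (Ia : img h S (h a)) by (exists a; split; auto).
  assert (Ib : img h S (h b)) by (exists b; split; auto).
  pose proof (Derive_correct _ _ (Hd a Sa)) as Dh.
  pose proof (Derive_correct _ _ (HHd _ Ia)) as DH.
  pose proof (deriv_inv S h Hinv a _ _ HO Hi Sa Dh DH) as E.
  pose proof (tangent_ineq _ _ _ _ _ Hc Ia Ib DH) as T.
  rewrite !Hi in T by assumption.
  assert (Hne : Derive h a <> 0) by (intro Z; rewrite Z in E; lra).
  assert (Hinv' : Derive Hinv (h a) = / Derive h a).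
  { apply (Rmult_eq_reg_r (Derive h a)); [|exact Hne]. rewrite Rinv_l by exact Hne. exact E. }
  rewrite Hinv' in T. unfold Rdiv. lra.
Qed.

Theorem lemma34 (Omega : R -> Prop) (f g Finv Ginv : R -> R)
  (HO : open Omega)
  (Hf : twice_diff_on Omega f) (Hg : twice_diff_on Omega g)
  (HFi : inverse_on Omega (Derive f) Finv)
  (HGi : inverse_on Omega (Derive g) Ginv)
  (HFd : forall y, img (Derive f) Omega y -> ex_derive Finv y)
  (HGd : forall y, img (Derive g) Omega y -> ex_derive Ginv y)
  (HFc : convex_on (img (Derive f) Omega) Finv)
  (HGc : convex_on (img (Derive g) Omega) Ginv) :
  forall p q z : R, Omega p -> Omega q ->
    Derive g q = Derive f p - z ->
    q >= p + (Derive f p - Derive g p - z) / Derive (Derive g) p /\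
    q <= p + (Derive f p - Derive g p - z) / Derive (Derive g) q /\
    q >= p + (Derive f q - Derive g q - z) / Derive (Derive f) p /\
    q <= p + (Derive f q - Derive g q - z) / Derive (Derive f) q.
Proof.
  intros p q z Op Oq Hz.
  assert (dF : forall x, Omega x -> ex_derive (Derive f) x) by (intros x Ox; apply Hf, Ox).
  assert (dG : forall x, Omega x -> ex_derive (Derive g) x) by (intros x Ox; apply Hg, Ox).
  pose proof (key _ _ _ p q HO dG HGi HGd HGc Op Oq) as K1.
  pose proof (key _ _ _ q p HO dG HGi HGd HGc Oq Op) as K2.
  pose proof (key _ _ _ p q HO dF HFi HFd HFc Op Oq) as K3.
  pose proof (key _ _ _ q p HO dF HFi HFd HFc Oq Op) as K4.
  replace (Derive f p - Derive g p - z) with (Derive g q - Derive g p) by lra.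
  replace (Derive f q - Derive g q - z) with (Derive f q - Derive f p) by lra.
  unfold Rdiv in *.
  replace (Derive g p - Derive g q) with (- (Derive g q - Derive g p)) in K2 by ring.
  replace (Derive f p - Derive f q) with (- (Derive f q - Derive f p)) in K4 by ring.
  rewrite Ropp_mult_distr_l_reverse in K2, K4.
  lra.
Qed.
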